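(* For every $\pi\in\mathfrak{S}_n$, as polynomials in $x$, \[\Omega^{(\ell)}(\pi;x)=\Omega^{(r)}(\pi\eta;x),\qquad \Omega'(\pi;x)=\overline{\Omega}'(\eta\pi;x),\] where $\eta\in\mathfrak{S}_n$ is the involution $\eta(i)=n+1-i$.
   Context: $\mathfrak{S}_n$ is the symmetric group on $[n]$, permutations are words $(\pi(1),\dots,\pi(n))$, products are compositions, so $\pi\eta=(\pi(n),\dots,\pi(1))$ and $(\eta\pi)(i)=n+1-\pi(i)$. Let $Z$ be a finite totally ordered set each of whose elements is ''plus-type'' or ''minus-type''. For $\pi\in\mathfrak{S}_n$ let $N(\pi;Z)$ be the number of sequences $(a_1,\dots,a_n)\in Z^n$ with $a_1\le\dots\le a_n$ such that for every $s\in[n-1]$: if $\pi(s)<\pi(s+1)$ then $a_s<a_{s+1}$ or ($a_s=a_{s+1}$ is plus-type); if $\pi(s)>\pi(s+1)$ then $a_s<a_{s+1}$ or ($a_s=a_{s+1}$ is minus-type). For a positive integer $k$: $\Omega'(\pi;k)=N(\pi;\{\bar1<1<\dots<\bar k<k\})$; $\overline{\Omega}'(\pi;k)=N(\pi;\{0<\bar1<1<\dots<\overline{k-1}<k-1<\bar k\})$; $\Omega^{(\ell)}(\pi;k)=N(\pi;\{0<\bar1<1<\dots<\bar k<k\})$; $\Omega^{(r)}(\pi;k)=N(\pi;\{\bar1<1<\dots<\bar k<k<\overline{k+1}\})$; here $0$ and unbarred $j$ are plus-type and barred $\bar j$ minus-type. Each is, as a function of $k$, the restriction of a unique polynomial with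 rational coefficients, denoted by the same symbol. *)

(* Defs.v *)
From mathcomp Require Import all_boot all_order all_algebra all_fingroup.
Set Implicit Arguments. Unset Strict Implicit. Unset Printing Implicit Defensive.

(* A finite totally ordered set Z of "plus-type"/"minus-type" elements is encoded
   as a seq bool listing the types of its elements in increasing order
   (true = plus-type, false = minus-type); its elements are the ordinals
   'I_(size Z) with their natural order. *)

(* N(pi; Z): number of weakly increasing a : [n] -> Z such that for consecutive
   positions s, s+1: a_s < a_{s+1}, or a_s = a_{s+1} is plus-type when
   pi(s) < pi(s+1) (ascent) and minus-type when pi(s) > pi(s+1) (descent). *)
Definition Ncount (n : nat) (Z : seq bool) (pi : 'S_n) : nat :=
  #|[set a : {ffun 'I_n -> 'I_(size Z)} |
      [forall i : 'I_n, forall j : 'I_n, (val j == (val i).+1) ==>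
        [&& (a i <= a j)%N &
            ((a i < a j)%N || ((a i == a j) && (nth false Z (a i) == (pi i < pi j)%N)))]]]|.

(* [:: bar1; 1; bar2; 2; ...; bark; k] *)
Definition pairs (k : nat) : seq bool := flatten (nseq k [:: false; true]).

(* Omega'(pi;k):  {bar1 < 1 < ... < bark < k} *)
Definition Omega' n (pi : 'S_n) (k : nat) : nat := Ncount (pairs k) pi.
(* bar Omega'(pi;k): {0 < bar1 < 1 < ... < bar(k-1) < k-1 < bark} *)
Definition Omegabar' n (pi : 'S_n) (k : nat) : nat :=
  Ncount (true :: pairs k.-1 ++ [:: false]) pi.
(* Omega^(l)(pi;k): {0 < bar1 < 1 < ... < bark < k} *)
Definition Omega_l n (pi : 'S_n) (k : nat) : nat := Ncount (true :: pairs k) pi.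
(* Omega^(r)(pi;k): {bar1 < 1 < ... < bark < k < bar(k+1)} *)
Definition Omega_r n (pi : 'S_n) (k : nat) : nat := Ncount (pairs k ++ [:: false]) pi.

(* eta(i) = n+1-i (0-indexed: i |-> n-1-i) *)
Definition eta (n : nat) : 'S_n := perm (@rev_ord_inj n).

(* Products are compositions: (pi eta)(i) = pi(eta(i)).  In mathcomp,
   (s * t)%g x = t (s x), so pi eta = (eta * pi)%g and eta pi = (pi * eta)%g. *)
Definition compl n (pi : 'S_n) : 'S_n := (eta n * pi)%g.
Definition compr n (pi : 'S_n) : 'S_n := (pi * eta n)%g.

(* "f and g are, as polynomials in x, equal": any rational polynomials
   restricting to f and g on positive integers coincide. *)
Definition poly_eq (f g : nat -> nat) : Prop :=
  forall p q : {poly rat},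
    (forall k, (0 < k)%N -> (p.[k%:R] = (f k)%:R)%R) ->
    (forall k, (0 < k)%N -> (q.[k%:R] = (g k)%:R)%R) -> p = q.

(* Main.v *)
Require Import Defs.
From mathcomp Require Import all_boot all_order all_algebra all_fingroup.
From mathcomp Require Import zify.
Import GRing.Theory Num.Theory.
Set Implicit Arguments. Unset Strict Implicit. Unset Printing Implicit Defensive.

Definition P n (Z : seq bool) (pi : 'S_n) (a : {ffun 'I_n -> 'I_(size Z)}) : bool :=
  [forall i : 'I_n, forall j : 'I_n, (val j == (val i).+1) ==>
        [&& (a i <= a j)%N &
            ((a i < a j)%N || ((a i == a j) && (nth false Z (a i) == (pi i < pi j)%N)))]].

Lemma NcountE n Z (pi : 'S_n) : Ncount Z pi = #|[set a | @P n Z pi a]|.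
Proof. by []. Qed.

Lemma card_maps (T T' : finType) (A : {set T}) (B : {set T'}) (f : T -> T') g :
  cancel f g -> cancel g f -> (forall x, x \in A -> f x \in B) ->
  (forall y, y \in B -> g y \in A) -> #|A| = #|B|.
Proof.
move=> fK gK fAB gBA; apply/eqP; rewrite eqn_leq.
apply/andP; split.
  rewrite -(card_imset A (can_inj fK)); apply: subset_leq_card.
  by apply/subsetP => _ /imsetP [x xA ->]; auto.
rewrite -(card_imset B (can_inj gK)); apply: subset_leq_card.
by apply/subsetP => _ /imsetP [x xA ->]; auto.
Qed.

Definition Fm n m m' (hs : m = m') (a : {ffun 'I_n -> 'I_m}) : {ffun 'I_n -> 'I_m'} :=
  [ffun i => cast_ord hs (a i)].
Definition Rm n m m' (hs : m = m') (a : {ffun 'I_n -> 'I_m}) : {ffun 'I_n -> 'I_m'} :=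
  [ffun i => cast_ord hs (rev_ord (a (rev_ord i)))].

Lemma flip_step n Z Z' (hs : size Z = size Z') (pi pi' : 'S_n)
  (hpi : forall i, val (pi' i) = n - (pi i).+1)
  (hz : forall x, x < size Z -> nth false Z' x = ~~ nth false Z x) a :
  P pi a -> P pi' (Fm hs a).
Proof.
move=> /forallP H; apply/forallP => i; apply/forallP => j; apply/implyP => /eqP hij.
move: (H i) => /forallP /(_ j) /implyP; rewrite hij eqxx => /(_ isT) /andP [h1 h2].
rewrite !ffunE /= hz // !hpi.
have pq : (pi i : nat) != pi j.
  apply/negP => /eqP/val_inj/perm_inj ij; move: hij; rewrite ij; lia.
have E : (n - (pi i).+1 < n - (pi j).+1) = ~~ (pi i < pi j).
  have := ltn_ord (pi i); have := ltn_ord (pi j); move: pq; rewrite neq_ltn; lia.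
rewrite E (_ : (cast_ord hs (a i) == cast_ord hs (a j)) = (a i == a j)); last by rewrite -!val_eqE.
move: h1 h2; case: (nth false Z (a i)); case: (pi i < pi j); case: (a i == a j); rewrite ?andbF ?andbT ?orbF /=; by move=> -> ->.
Qed.

Lemma rev_step n Z Z' (hs : size Z = size Z') (pi pi' : 'S_n)
  (hpi : forall i, pi' i = pi (rev_ord i))
  (hz : forall x, x < size Z -> nth false Z' x = ~~ nth false Z (size Z - x.+1)) a :
  P pi a -> P pi' (Rm hs a).
Proof.
move=> /forallP H; apply/forallP => i; apply/forallP => j; apply/implyP => /eqP hij.
have {}hij : (j : nat) = i.+1 := hij.
move: (H (rev_ord j)) => /forallP /(_ (rev_ord i)) /implyP.
have hr : (val (rev_ord i) == (val (rev_ord j)).+1).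
  rewrite /= ; have := ltn_ord j; lia.
move=> /(_ hr) /andP [h1 h2].
rewrite !ffunE /= !hpi.
have pq : (pi (rev_ord i) : nat) != pi (rev_ord j).
  apply/negP => /eqP/val_inj/perm_inj/rev_ord_inj ij; move: hij; rewrite ij; lia.
have E : (pi (rev_ord i) < pi (rev_ord j)) = ~~ (pi (rev_ord j) < pi (rev_ord i)).
  move: pq; rewrite neq_ltn; lia.
rewrite E (_ : (cast_ord hs (rev_ord (a (rev_ord i))) == cast_ord hs (rev_ord (a (rev_ord j))))
   = (a (rev_ord j) == a (rev_ord i) :> nat)); last first.
  rewrite -!val_eqE /=; have := ltn_ord (a (rev_ord i)); have := ltn_ord (a (rev_ord j)); lia.
have xl := ltn_ord (a (rev_ord i)); have yl := ltn_ord (a (rev_ord j)).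
rewrite hz; last lia.
have -> : size Z - (size Z - (a (rev_ord i)).+1).+1 = a (rev_ord i) by lia.
move: h1 h2 xl yl.
set x := (a (rev_ord i) : nat); set y := (a (rev_ord j) : nat).
set m := size Z.
have -> : (a (rev_ord j) == a (rev_ord i)) = (y == x) by [].
clearbody x y m.
move=> h1 h2 xl yl.
have -> : (m - x.+1 <= m - y.+1) = (y <= x) by lia.
have -> : (m - x.+1 < m - y.+1) = (y < x) by lia.
rewrite h1 /=; move: h2; case: (ltnP y x) => //= _ /andP [/eqP yx]; move: yx => ->.
by rewrite eqxx /= eqb_negLR negbK.
Qed.

Lemma Ncount_flip n Z Z' (hs : size Z = size Z') (pi pi' : 'S_n)
  (hpi : forall i, val (pi' i) = n - (pi i).+1)
  (hz : forall x, x < size Z -> nth false Z' x = ~~ nth false Z x) :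
  Ncount Z pi = Ncount Z' pi'.
Proof.
rewrite !NcountE; apply: (@card_maps _ _ _ _ (Fm hs) (Fm (esym hs))).
- by move=> a; apply/ffunP => i; rewrite !ffunE; apply/val_inj.
- by move=> a; apply/ffunP => i; rewrite !ffunE; apply/val_inj.
- by move=> a; rewrite !inE; apply: flip_step.
- move=> a; rewrite !inE; apply: flip_step.
  + move=> i; rewrite hpi; change (nat_of_ord (pi i) = n - (n - (pi i).+1).+1); have := ltn_ord (pi i); lia.
  + by move=> x hx; rewrite hz ?negbK // hs.
Qed.

Lemma Ncount_rev n Z Z' (hs : size Z = size Z') (pi pi' : 'S_n)
  (hpi : forall i, pi' i = pi (rev_ord i))
  (hz : forall x, x < size Z -> nth false Z' x = ~~ nth false Z (size Z - x.+1)) :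
  Ncount Z pi = Ncount Z' pi'.
Proof.
rewrite !NcountE; apply: (@card_maps _ _ _ _ (Rm hs) (Rm (esym hs))).
- move=> a; apply/ffunP => i; rewrite !ffunE; apply/val_inj => /=.
  rewrite rev_ordK -hs; case: (a i) => /= ? ?; lia.
- move=> a; apply/ffunP => i; rewrite !ffunE; apply/val_inj => /=.
  rewrite rev_ordK hs; case: (a i) => /= ? ?; lia.
- by move=> a; rewrite !inE; apply: rev_step.
- move=> a; rewrite !inE; apply: rev_step.
  + by move=> i; rewrite hpi rev_ordK.
  + move=> x hx; rewrite -hs in hx *.
    rewrite hz; last lia.
    by rewrite negbK; congr nth; lia.
Qed.

Lemma size_pairs k : size (pairs k) = k.*2.
Proof. by elim: k => //= k IH; rewrite IH. Qed.

Lemma nth_pairs k i : nth false (pairs k) i = (i < k.*2) && odd i.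
Proof.
elim: k i => [|k IH] [|[|i]] //= => //=.
by rewrite -/(pairs k) IH doubleS ltnS ltnS negbK.
Qed.

Lemma poly_eq_pt (f g : nat -> nat) : (forall k, 0 < k -> f k = g k) -> poly_eq f g.
Proof.
move=> fg p q hp hq; apply/eqP; rewrite -GRing.subr_eq0; apply/negPn/negP => nz.
have := max_poly_roots nz (rs := [seq ((i.+1)%:R : rat)%R | i <- iota 0 (size (p - q)%R)]).
rewrite size_map size_iota ltnn => H; suff: false by []; apply: H.
  apply/allP => _ /mapP [i _ ->]; rewrite /root hornerD hornerN hp // hq // fg //.
  by rewrite GRing.subrr.
rewrite map_inj_uniq ?iota_uniq // => i j /eqP; rewrite eqr_nat => /eqP [] //.
Qed.

Theorem proposition4p7 (n : nat) (pi : 'S_n) :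
  poly_eq (Omega_l pi) (Omega_r (compl pi)) /\
  poly_eq (Omega' pi) (Omegabar' (compr pi)).
Proof.
split; apply: poly_eq_pt => k k0.
- rewrite /Omega_l /Omega_r.
  have hs : size (true :: pairs k) = size (pairs k ++ [:: false]).
    by rewrite /= size_cat size_pairs addn1.
  apply: (Ncount_rev hs).
    by move=> i; rewrite /compl permM /eta permE.
  move=> x; rewrite /= size_pairs ltnS => hx.
  rewrite nth_cat size_pairs.
  case: ltnP => hx2.
    rewrite nth_pairs hx2 /= subSS.
    case e: (k.*2 - x) => [|y]; first lia.
    rewrite /= nth_pairs (_ : y < k.*2); last lia.
    rewrite /=.
    have h : odd (x + y.+1) = false.
      by rewrite (_ : x + y.+1 = k.*2) ?odd_double //; lia.
    by move: h; rewrite oddD /=; case: (odd x); case: (odd y).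
  have -> : x = k.*2 by lia.
  by rewrite subnn subSS subnn.
- rewrite /Omega' /Omegabar'.
  case: k k0 => // k _ /=.
  have hs : size (pairs k.+1) = size (true :: pairs k ++ [:: false]).
    by rewrite /= size_cat size_pairs addn1.
  apply: (Ncount_flip hs).
    by move=> i; rewrite /compr permM /eta permE.
  move=> x; rewrite size_pairs => hx.
  rewrite nth_pairs hx /=.
  case: x hx => [|x] hx //=.
  rewrite nth_cat size_pairs; case: ltnP => hx2.
    by rewrite nth_pairs hx2 negbK.
  move: hx; rewrite doubleS => hx.
  have ex : x = k.*2 by lia.
  by rewrite ex subnn /= odd_double.
Qed.
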